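(* Let $\mathbb{R}^{2n}$ have coordinates $(x_1,y_1,x_2,y_2,\dots,x_n,y_n)$. Consider symplectic forms $\omega_1 = \sum_{i=1}^n f_i(x_i,y_i)\,dx_i\wedge dy_i$ and $\omega_2 = \sum_{i=1}^n g_i(x_i,y_i)\,dx_i\wedge dy_i$, where $f_i,g_i:\mathbb{R}^2\to\mathbb{R}$ are smooth and nowhere vanishing. Suppose $\varphi = (\varphi^1,\dots,\varphi^{2n}) \in \operatorname{Symp}(\mathbb{R}^{2n},\omega_{\mathrm{std}})$ satisfies $\varphi^*\omega_1 = \omega_2$. Then for every point $x \in \mathbb{R}^{2n}$, the multisets $\{f_i(\varphi^{2i-1}(x),\varphi^{2i}(x)) : 1\le i\le n\}$ and $\{g_i(x_i,y_i) : 1\le i\le n\}$ coincide (counted with multiplicity).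
   Context: $\omega_{\mathrm{std}} = \sum_{i=1}^n dx_i\wedge dy_i$ in these coordinates. $\operatorname{Symp}(\mathbb{R}^{2n},\omega_{\mathrm{std}})$ is the set of diffeomorphisms $\varphi$ of $\mathbb{R}^{2n}$ with $\varphi^*\omega_{\mathrm{std}} = \omega_{\mathrm{std}}$, where $(\varphi^*\omega)(x)(v,w) = \omega(\varphi(x))(d\varphi_x v, d\varphi_x w)$. *)

(* Defs.v *)
From HB Require Import structures.
From mathcomp Require Import all_boot all_order all_algebra.
From mathcomp Require Import all_classical all_reals all_analysis.
Set Implicit Arguments. Unset Strict Implicit. Unset Printing Implicit Defensive.
Import Order.TTheory GRing.Theory Num.Theory.
Import numFieldNormedType.Exports.
Local Open Scope ring_scope.

Section Defs.
Variable R : realType.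

Definition rcoord (m : nat) (j : 'I_m) (v : 'rV[R]_m) : R := v ord0 j.

Definition ebasis (m : nat) (j : 'I_m) : 'rV[R]_m := \row_k (k == j)%:R.

Fixpoint iter_partial (m : nat) (js : seq 'I_m) (f : 'rV[R]_m -> R)
  : 'rV[R]_m -> R :=
  match js with
  | [::] => f
  | j :: js' => fun x => derive (iter_partial js' f) x (ebasis j)
  end.

Definition smooth (m : nat) (f : 'rV[R]_m -> R) : Prop :=
  forall js : seq 'I_m,
    continuous (iter_partial js f) /\
    (forall (j : 'I_m) (x : 'rV[R]_m), derivable (iter_partial js f) x (ebasis j)).

Definition smooth_map (m p : nat) (F : 'rV[R]_m -> 'rV[R]_p) : Prop :=
  forall k : 'I_p, smooth (fun x => rcoord k (F x)).

Definition smooth2 (h : R -> R -> R) : Prop :=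
  smooth (fun p : 'rV[R]_2 => h (p ord0 ord0) (p ord0 (Ordinal (isT : (1 < 2)%N)))).

Definition diffeomorphism (m : nat) (F : 'rV[R]_m -> 'rV[R]_m) : Prop :=
  smooth_map F /\
  exists G : 'rV[R]_m -> 'rV[R]_m, smooth_map G /\ cancel F G /\ cancel G F.

(* 2-forms on R^m: at each point a (bilinear) map of two tangent vectors *)
Definition two_form (m : nat) := 'rV[R]_m -> 'rV[R]_m -> 'rV[R]_m -> R.

Definition pullback (m : nat) (F : 'rV[R]_m -> 'rV[R]_m) (w : two_form m)
  : two_form m :=
  fun x v v' => w (F x) (derive F x v) (derive F x v').

End Defs.

(* coordinates (x_1,y_1,...,x_n,y_n) on R^{2n}: with 0-based i : 'I_n,
   x_{i+1} is index 2i and y_{i+1} is index 2i+1 *)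
Lemma xidx_lt (n : nat) (i : 'I_n) : (2 * i < 2 * n)%N.
Proof. by rewrite ltn_pmul2l // ltn_ord. Qed.

Lemma yidx_lt (n : nat) (i : 'I_n) : (2 * i + 1 < 2 * n)%N.
Proof.
rewrite addn1.
have : (2 * i.+1 <= 2 * n)%N by rewrite leq_pmul2l.
by rewrite mulnS add2n.
Qed.

Definition xidx (n : nat) (i : 'I_n) : 'I_(2 * n) := Ordinal (xidx_lt i).
Definition yidx (n : nat) (i : 'I_n) : 'I_(2 * n) := Ordinal (yidx_lt i).

Definition diag_form (R : realType) (n : nat) (h : 'I_n -> 'rV[R]_(2 * n) -> R)
  : two_form R (2 * n) :=
  fun p v w => \sum_(i < n) h i p *
      (rcoord (xidx i) v * rcoord (yidx i) w - rcoord (yidx i) v * rcoord (xidx i) w).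

Definition omega_std (R : realType) (n : nat) : two_form R (2 * n) :=
  diag_form (fun _ _ => 1).

Definition split_form (R : realType) (n : nat) (f : 'I_n -> R -> R -> R)
  : two_form R (2 * n) :=
  diag_form (fun i p => f i (rcoord (xidx i) p) (rcoord (yidx i) p)).

Definition symplecto (R : realType) (n : nat) (F : 'rV[R]_(2 * n) -> 'rV[R]_(2 * n))
  : Prop :=
  diffeomorphism F /\ pullback F (@omega_std R n) = @omega_std R n.

(* Main.v *)
Require Import Defs.
From HB Require Import structures.
From mathcomp Require Import all_boot all_order all_algebra.
From mathcomp Require Import all_classical all_reals all_analysis.
From mathcomp Require Import zify.
Set Implicit Arguments. Unset Strict Implicit. Unset Printing Implicit Defensive.
Import Order.TTheory GRing.Theory Num.Theory.
Local Open Scope ring_scope.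

Section Aux.
Variable R : realType.
Variable n : nat.

Lemma half_lt (k : 'I_(2 * n)) : (k./2 < n)%N.
Proof. by rewrite ltn_half_double -mul2n ltn_ord. Qed.

Definition hf (k : 'I_(2 * n)) : 'I_n := Ordinal (half_lt k).

Lemma hf_x (i : 'I_n) : hf (xidx i) = i.
Proof. by apply: val_inj => /=; rewrite mul2n doubleK. Qed.

Lemma hf_y (i : 'I_n) : hf (yidx i) = i.
Proof. by apply: val_inj => /=; rewrite addn1 mul2n; exact: uphalf_double. Qed.

Lemma x_neq_y (i i' : 'I_n) : (xidx i == yidx i') = false.
Proof. apply/negP => /eqP/(congr1 val) /=; lia. Qed.

Lemma y_neq_x (i i' : 'I_n) : (yidx i == xidx i') = false.
Proof. apply/negP => /eqP/(congr1 val) /=; lia. Qed.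

Lemma xx_eq (i i' : 'I_n) : (xidx i == xidx i') = (i == i').
Proof. rewrite -!val_eqE /=; apply/eqP/eqP; lia. Qed.

Lemma yy_eq (i i' : 'I_n) : (yidx i == yidx i') = (i == i').
Proof. rewrite -!val_eqE /=; apply/eqP/eqP; lia. Qed.

Lemma xy_cover k : k = xidx (hf k) \/ k = yidx (hf k).
Proof.
have := odd_double_half k; case: (odd k) => /= h; [right|left];
  apply: val_inj => /=; lia.
Qed.

Definition Jm : 'M[R]_(2 * n) :=
  \sum_(i < n) (delta_mx (xidx i) (yidx i) - delta_mx (yidx i) (xidx i)).
Definition Dm (c : 'I_n -> R) : 'M[R]_(2 * n) := diag_mx (\row_k c (hf k)).

Lemma rowxJ (i : 'I_n) : delta_mx 0 (xidx i) *m Jm = delta_mx 0 (yidx i) :> 'rV[R]_(2 * n).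
Proof.
rewrite /Jm mulmx_sumr (bigD1 i) //= big1 ?addr0.
  by rewrite mulmxBr !mul_delta_mx_cond eqxx x_neq_y mulr0n subr0.
move=> j hj; rewrite mulmxBr !mul_delta_mx_cond x_neq_y xx_eq eq_sym.
by rewrite (negbTE hj) !mulr0n subrr.
Qed.

Lemma rowyJ (i : 'I_n) : delta_mx 0 (yidx i) *m Jm = - delta_mx 0 (xidx i) :> 'rV[R]_(2 * n).
Proof.
rewrite /Jm mulmx_sumr (bigD1 i) //= big1 ?addr0.
  by rewrite mulmxBr !mul_delta_mx_cond eqxx y_neq_x mulr0n sub0r.
move=> j hj; rewrite mulmxBr !mul_delta_mx_cond y_neq_x yy_eq eq_sym.
by rewrite (negbTE hj) !mulr0n subrr.
Qed.

Lemma JJ : Jm *m Jm = - 1%:M.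
Proof.
apply/row_matrixP => k; rewrite !rowE mulmxA mulmxN mulmx1.
by case: (xy_cover k) => ->; rewrite ?rowxJ ?rowyJ ?mulNmx ?rowxJ ?opprK.
Qed.

Lemma diag_delta (d : 'rV[R]_(2 * n)) (a b : 'I_(2 * n)) :
  diag_mx d *m delta_mx a b = d 0 a *: delta_mx a b.
Proof.
rewrite mul_diag_mx; apply/matrixP => i j; rewrite !mxE.
by case: eqP => [->|] //=; rewrite !mulr0.
Qed.

Lemma DJ (c : 'I_n -> R) : Dm c *m Jm =
  \sum_(i < n) c i *: (delta_mx (xidx i) (yidx i) - delta_mx (yidx i) (xidx i)).
Proof.
rewrite /Jm mulmx_sumr; apply: eq_bigr => i _.
by rewrite mulmxBr !diag_delta !mxE hf_x hf_y scalerBr.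
Qed.

Lemma vdw m (v w : 'rV[R]_m) (a b : 'I_m) :
  (v *m delta_mx a b *m w^T) 0 0 = v 0 a * w 0 b.
Proof.
have -> : v *m delta_mx a b = v 0 a *: delta_mx 0 b.
  apply/rowP => k; rewrite !mxE (bigD1 a) //= big1 ?addr0.
    by rewrite !mxE eqxx.
  by move=> j hj; rewrite !mxE (negbTE hj) mulr0.
by rewrite -scalemxAl -rowE !mxE.
Qed.

Lemma vdw' m (v w : 'rV[R]_m) (a b : 'I_m) :
  (v *m delta_mx a b *m w^T) ord0 ord0 = v 0 a * w 0 b.
Proof. exact: vdw. Qed.

Lemma form_eq (h : 'I_n -> 'rV[R]_(2 * n) -> R) p v w :
  diag_form h p v w = (v *m (Dm (fun i => h i p) *m Jm) *m w^T) 0 0.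
Proof.
rewrite DJ mulmx_sumr mulmx_suml summxE; apply: eq_bigr => i _.
by rewrite -scalemxAr -scalemxAl mxE mulmxBr mulmxBl mxE vdw mxE vdw.
Qed.

Lemma Dm1 : Dm (fun _ => 1) = 1%:M.
Proof. by apply/matrixP => i j; rewrite !mxE. Qed.


Lemma entry m (A M : 'M[R]_m) j k :
  (A *m M *m A^T) j k = (row j A *m M *m (row k A)^T) 0 0.
Proof.
have -> : (A *m M *m A^T) j k = row j (A *m M *m A^T) 0 k by rewrite [RHS]mxE.
rewrite !row_mul !mxE.
by apply: eq_bigr => l _; rewrite !mxE.
Qed.

Lemma ebasis_entry m (M : 'M[R]_m) j k :
  M j k = (ebasis R j *m M *m (ebasis R k)^T) 0 0.
Proof.
have eb l : ebasis R l = row l (1%:M : 'M[R]_m).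
  by apply/rowP => t; rewrite !mxE eq_sym.
by rewrite !eb -entry mul1mx trmx1 mulmx1.
Qed.

Lemma prod_half (G : 'I_n -> {poly R}) :
  \prod_(k < 2 * n) G (hf k) = \prod_(i < n) (G i * G i).
Proof.
rewrite (partition_big hf predT) //=; apply: eq_bigr => i _.
rewrite (bigD1 (xidx i)) ?hf_x //= (bigD1 (yidx i)) /= ?hf_y ?y_neq_x ?eqxx //.
rewrite big1 ?mulr1 ?hf_x ?hf_y //.
move=> k /andP[/andP[/eqP hk hy] hx].
by case: (xy_cover k) => e; [move: hy | move: hx]; rewrite e hk eqxx.
Qed.

End Aux.
Arguments Jm {R n}.

Theorem theorem2p5 (R : realType) (n : nat) (f g : 'I_n -> R -> R -> R)
  (phi : 'rV[R]_(2 * n) -> 'rV[R]_(2 * n))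
  (hf_smooth : forall i, smooth2 (f i)) (hg_smooth : forall i, smooth2 (g i))
  (hf_nz : forall i a b, f i a b != 0) (hg_nz : forall i a b, g i a b != 0)
  (hphi : symplecto phi)
  (hpull : pullback phi (split_form f) = split_form g) :
  forall x : 'rV[R]_(2 * n),
    perm_eq [seq f i (rcoord (xidx i) (phi x)) (rcoord (yidx i) (phi x)) | i <- enum 'I_n]
            [seq g i (rcoord (xidx i) x) (rcoord (yidx i) x) | i <- enum 'I_n].
Proof.
move=> x.
have [_ hstd] := hphi.
pose a j := derive phi x (ebasis R j).
pose A : 'M[R]_(2 * n) := \matrix_(j, l) a j 0 l.
have rowA j : row j A = a j by apply/rowP => l; rewrite !mxE.
have transfer (h1 h2 : 'I_n -> 'rV[R]_(2 * n) -> R) :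
    pullback phi (diag_form h1) = diag_form h2 ->
    A *m (Dm (fun i => h1 i (phi x)) *m Jm) *m A^T = Dm (fun i => h2 i x) *m Jm.
  move=> e; apply/matrixP => j k.
  rewrite entry !rowA [RHS]ebasis_entry -!form_eq.
  by have := congr1 (fun F => F x (ebasis R j) (ebasis R k)) e; rewrite /pullback.
have hA1 := transfer (fun _ _ => 1) (fun _ _ => 1) hstd.
rewrite /= Dm1 mul1mx in hA1.
have hA2 := transfer _ _ hpull.
set Df := Dm _ in hA2; set Dg := Dm _ in hA2.
pose B := - (Jm *m A^T *m Jm).
have hAB : A *m B = 1%:M by rewrite mulmxN !mulmxA hA1 JJ opprK.
have hBA := mulmx1C hAB.
have hJA : Jm *m A^T = B *m Jm.
  by rewrite /B mulNmx -!mulmxA JJ !mulmxN mulmx1 opprK.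
have e1 : A *m Df *m B *m Jm = Dg *m Jm by rewrite -hA2 -!mulmxA hJA.
have hsim : A *m Df *m B = Dg.
  have e2 := congr1 (mulmx^~ Jm) e1; rewrite /= -!mulmxA JJ !mulmxN !mulmx1 in e2.
  by rewrite -mulmxA; exact: oppr_inj e2.
have hDf : Df = B *m Dg *m A.
  by rewrite -hsim !mulmxA hBA mul1mx -mulmxA hBA mulmx1.
have hcp : char_poly Df = char_poly Dg.
  rewrite /char_poly /char_poly_mx hDf.
  have -> : 'X%:M - map_mx (@polyC R) (B *m Dg *m A) =
     map_mx (@polyC R) B *m ('X%:M - map_mx (@polyC R) Dg) *m map_mx (@polyC R) A.
    rewrite mulmxBr mulmxBl scalar_mxC -[('X%:M *m _) *m _]mulmxA -map_mxM hBA map_mx1 mulmx1.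
    by rewrite !map_mxM.
  rewrite !det_mulmx mulrAC -det_mulmx -map_mxM hBA map_mx1 det1 mul1r.
  done.
rewrite !char_poly_trig ?diag_mx_is_trig // in hcp.
have dd (c : 'I_n -> R) (k : 'I_(2 * n)) : Dm c k k = c (hf k).
  by rewrite !mxE eqxx mulr1n.
have hprod (c : 'I_n -> R) : \prod_(k < 2 * n) ('X - (Dm c k k)%:P) =
    \prod_(i < n) (('X - (c i)%:P) * ('X - (c i)%:P)).
  by rewrite -(prod_half (fun i => 'X - (c i)%:P)); apply: eq_bigr => k _; rewrite dd.
rewrite /Df /Dg !hprod in hcp.
set sf := [seq _ | i <- enum 'I_n]; set sg := [seq _ | i <- enum 'I_n].
have hp : perm_eq (sf ++ sf) (sg ++ sg).
  apply: prod_XsubC_eq.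
  have E (G : 'I_n -> {poly R}) : \prod_(i <- enum 'I_n) G i = \prod_(i < n) G i.
    by rewrite big_enum; apply: eq_bigl.
  have E' (G : 'I_n -> {poly R}) : \prod_(i <- Finite.enum 'I_n) G i = \prod_(i < n) G i.
    by rewrite -enumT E.
  rewrite !big_cat !big_map !E'; move: hcp; rewrite !big_split; exact.
apply/permP => P; move/permP: hp => /(_ P).
by rewrite !count_cat !addnn => /double_inj.
Qed.
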